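(* Let $\alpha\in\mathbb{R}^+\setminus\mathbb{Q}$ and let $f\colon[0,1)\to\mathbb{R}$ be non-negative and Riemann integrable. Then for every $y\in[0,1)$ the autocorrelation of $\mu_y=\sum_{z\in\mathbb{Z}}f(T_\alpha^z(y))\,\delta_z$ exists and equals $\sum_{z\in\mathbb{Z}}\Big(\int_0^1 f(T_\alpha^{-z}x)\,f(x)\,dx\Big)\delta_z$; in particular it is independent of $y$.
   Context: $T_\alpha(x)=\{x+\alpha\}$ on $[0,1)$, with $\{t\}$ the fractional part. For a measure $\mu$ on $\mathbb{Z}$, $\widetilde{\mu}(A)=\overline{\mu(-A)}$, $\mu|_n$ is the restriction to $\{|x|\le n\}$, and the autocorrelation $\gamma_\mu$ is the vague limit (pointwise convergence of masses at each $z\in\mathbb{Z}$) of $\frac1{2n+1}\mu|_n*\widetilde{\mu|_n}$. *)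

(* Defs.v *)
From Stdlib Require Export Reals ZArith.
Open Scope R_scope.

Definition T_iter (alpha : R) (z : Z) (y : R) : R :=
  frac_part (y + IZR z * alpha).

(* A real-valued measure on Z, given by its masses at each point. *)
Definition zmeasure := Z -> R.

Definition mu_y (f : R -> R) (alpha y : R) : zmeasure :=
  fun z => f (T_iter alpha z y).

Definition restr (mu : zmeasure) (n : nat) : zmeasure :=
  fun x => if Z.leb (Z.abs x) (Z.of_nat n) then mu x else 0.

(* tilde mu (A) = conj (mu (-A)); masses are real so conj is the identity *)
Definition tilde (mu : zmeasure) : zmeasure := fun x => mu (- x)%Z.

(* convolution mu * nu at z, for mu supported in {|x| <= n}:
   (mu * nu)({z}) = sum_{|x| <= n} mu(x) nu(z - x) *)
Definition conv_supp (n : nat) (mu nu : zmeasure) : zmeasure :=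
  fun z => sum_f_R0 (fun k => let x := (Z.of_nat k - Z.of_nat n)%Z in
                               mu x * nu (z - x)%Z) (2 * n).

Definition autocorr_approx (mu : zmeasure) (n : nat) : zmeasure :=
  fun z => / INR (2 * n + 1) * conv_supp n (restr mu n) (tilde (restr mu n)) z.

(* gamma is the autocorrelation of mu: vague limit = pointwise convergence of masses *)
Definition is_autocorrelation (mu gamma : zmeasure) : Prop :=
  forall z : Z, Un_cv (fun n => autocorr_approx mu n z) (gamma z).

Definition irrational (a : R) : Prop :=
  ~ exists p q : Z, q <> 0%Z /\ a = IZR p / IZR q.

(* Main.v *)
Require Import Defs.
From Stdlib Require Import Reals ZArith Lra Lia RList List.
Import ListNotations.
Open Scope R_scope.


Lemma frac_bounds x : 0 <= frac_part x < 1.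
Proof. destruct (base_fp x); lra. Qed.

Lemma Int_part_plus_Z x m : Int_part (x + IZR m) = (Int_part x + m)%Z.
Proof.
  unfold Int_part.
  assert (H: up (x + IZR m) = (up x + m)%Z).
  { symmetry; apply tech_up; destruct (archimed x) as [H1 H2];
    rewrite plus_IZR; lra. }
  rewrite H; ring.
Qed.

Lemma frac_plus_Z x m : frac_part (x + IZR m) = frac_part x.
Proof.
  unfold frac_part. rewrite Int_part_plus_Z, plus_IZR. ring.
Qed.

Lemma frac_id x : 0 <= x < 1 -> frac_part x = x.
Proof.
  intros H. unfold frac_part, Int_part.
  assert (up x = 1%Z) as ->. { symmetry; apply tech_up; simpl; lra. }
  simpl. ring.
Qed.

Lemma frac_frac_plus x y : frac_part (frac_part x + y) = frac_part (x + y).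
Proof.
  unfold frac_part at 2.
  replace (x - IZR (Int_part x) + y) with ((x + y) + IZR (- Int_part x))
    by (rewrite opp_IZR; ring).
  apply frac_plus_Z.
Qed.

Lemma frac_shift1 x : 1 <= x < 2 -> frac_part x = x - 1.
Proof.
  intros H. replace (frac_part x) with (frac_part (x - 1 + IZR 1)) by (f_equal; simpl; ring).
  rewrite frac_plus_Z. apply frac_id. lra.
Qed.

Fixpoint sumR (n : nat) (F : nat -> R) : R :=
  match n with O => 0 | S n => sumR n F + F n end.

Lemma sumR_ext n F G : (forall k, (k < n)%nat -> F k = G k) -> sumR n F = sumR n G.
Proof.
  induction n; simpl; intros H; auto.
  rewrite IHn by (intros; apply H; lia). rewrite H by lia. auto.
Qed.

Lemma sumR_le n F G : (forall k, (k < n)%nat -> F k <= G k) -> sumR n F <= sumR n G.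
Proof.
  induction n; simpl; intros H; [lra|].
  assert (sumR n F <= sumR n G) by (apply IHn; intros; apply H; lia).
  assert (F n <= G n) by (apply H; lia). lra.
Qed.

Lemma sumR_plus n F G : sumR n (fun k => F k + G k) = sumR n F + sumR n G.
Proof. induction n; simpl; [ring| rewrite IHn; ring]. Qed.

Lemma sumR_scal n c F : sumR n (fun k => c * F k) = c * sumR n F.
Proof. induction n; simpl; [ring| rewrite IHn; ring]. Qed.

Lemma sumR_const n c : sumR n (fun _ => c) = INR n * c.
Proof. induction n; simpl sumR; [simpl; ring| rewrite IHn, S_INR; ring]. Qed.

Lemma sumR_split m n F : sumR (m + n) F = sumR m F + sumR n (fun k => F (m + k)%nat).
Proof.
  induction n; simpl.
  - rewrite Nat.add_0_r; ring.
  - rewrite Nat.add_succ_r; simpl; rewrite IHn; ring.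
Qed.

Lemma sumR_nonneg n F : (forall k, (k < n)%nat -> 0 <= F k) -> 0 <= sumR n F.
Proof.
  intros H. replace 0 with (sumR n (fun _ => 0)) by (rewrite sumR_const; ring).
  apply sumR_le; auto.
Qed.

Lemma sumR_abs n F : Rabs (sumR n F) <= sumR n (fun k => Rabs (F k)).
Proof.
  induction n; simpl; [rewrite Rabs_R0; lra|].
  eapply Rle_trans; [apply Rabs_triang|]. lra.
Qed.

Lemma sumR_swap n m (F : nat -> nat -> R) :
  sumR n (fun i => sumR m (fun j => F i j)) = sumR m (fun j => sumR n (fun i => F i j)).
Proof.
  induction n; simpl.
  - rewrite sumR_const; ring.
  - rewrite IHn, <- sumR_plus. reflexivity.
Qed.

Lemma sumR_rev n F : sumR n F = sumR n (fun k => F (n - 1 - k)%nat).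
Proof.
  induction n; auto.
  replace (S n) with (1 + n)%nat at 2 by lia.
  rewrite sumR_split. simpl sumR at 1. simpl sumR at 2.
  rewrite IHn.
  replace (S n - 1 - 0)%nat with n by lia.
  rewrite Rplus_0_l, Rplus_comm. f_equal.
  - f_equal. lia.
  - apply sumR_ext; intros k Hk. f_equal. lia.
Qed.

Lemma sum_f_R0_sumR F n : sum_f_R0 F n = sumR (S n) F.
Proof. induction n; simpl; [ring|]. simpl in IHn; rewrite IHn; ring. Qed.

Lemma IZR_pos_ge1 (a : Z) : 0 < IZR a -> 1 <= IZR a.
Proof.
  intros H. apply lt_0_IZR in H. apply IZR_le. lia.
Qed.

Lemma pow_le1 x n : 0 <= x <= 1 -> x ^ n <= 1.
Proof.
  intros H; induction n; simpl; [lra|].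
  assert (0 <= x ^ n) by (apply pow_le; lra). nra.
Qed.

Lemma comb_nz alpha (Hirr : irrational alpha) (a b : Z) :
  b <> 0%Z -> IZR a + IZR b * alpha <> 0.
Proof.
  intros Hb H. apply Hirr. exists (- a)%Z, b. split; auto.
  rewrite opp_IZR. apply not_0_IZR in Hb. field_simplify_eq; auto. lra.
Qed.

Lemma comb_b_nz (a b : Z) alpha : 0 < IZR a + IZR b * alpha < 1 -> b <> 0%Z.
Proof.
  intros H Hb. subst b. simpl in H.
  assert (1 <= IZR a) by (apply IZR_pos_ge1; lra). lra.
Qed.

Lemma small_comb alpha (Hirr : irrational alpha) :
  forall n : nat, exists a b : Z, 0 < IZR a + IZR b * alpha < (/2) ^ n.
Proof.
  induction n.
  - exists (- Int_part alpha)%Z, 1%Z. simpl.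
    pose proof (frac_bounds alpha) as Hf. unfold frac_part in Hf.
    rewrite opp_IZR.
    assert (alpha - IZR (Int_part alpha) <> 0).
    { intros H. apply Hirr. exists (Int_part alpha), 1%Z. split; [lia|].
      simpl. lra. }
    lra.
  - destruct IHn as (a & b & Hr).
    set (r := IZR a + IZR b * alpha) in *.
    assert (Hp : 0 < (/2) ^ n <= 1).
    { split; [apply pow_lt; lra|]. apply pow_le1; lra. }
    assert (Hb : b <> 0%Z) by (apply (comb_b_nz a b alpha); fold r; lra).
    set (N := Int_part (/ r)).
    pose proof (base_Int_part (/ r)) as HN. fold N in HN.
    assert (Hr0 : 0 < r) by lra.
    assert (H1 : IZR N * r <= 1).
    { destruct HN as [HN _]. apply Rmult_le_compat_r with (r := r) in HN; [|lra].
      rewrite Rinv_l in HN; lra. }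
    assert (H2 : 1 < (IZR N + 1) * r).
    { destruct HN as [_ HN]. assert (/ r < IZR N + 1) by lra.
      apply Rmult_lt_compat_r with (r := r) in H; [|lra].
      rewrite Rinv_l in H; lra. }
    set (r' := 1 - IZR N * r).
    assert (Hr'nz : r' <> 0).
    { unfold r', r. intros H.
      assert (HN0 : N <> 0%Z).
      { intros E; rewrite E in H; simpl in H. lra. }
      apply (comb_nz alpha Hirr (1 - N * a)%Z (- (N * b))%Z).
      - lia.
      - rewrite minus_IZR, opp_IZR, !mult_IZR. simpl. lra. }
    assert (Hr'int : 1 - IZR N * r = IZR (1 - N * a)%Z + IZR (- (N * b))%Z * alpha).
    { rewrite minus_IZR, opp_IZR, !mult_IZR. unfold r. simpl. ring. }
    destruct (Rle_dec r' (r / 2)) as [Hle|Hgt].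
    + exists (1 - N * a)%Z, (- (N * b))%Z. rewrite <- Hr'int. fold r'.
      simpl. unfold r' in *. lra.
    + exists (N * a + a - 1)%Z, (N * b + b)%Z.
      rewrite minus_IZR, !plus_IZR, !mult_IZR. simpl.
      unfold r', r in *. nra.
Qed.

Lemma small_gamma alpha (Hirr : irrational alpha) (d : R) : 0 < d ->
  exists (q : nat) (p : Z), (1 <= q)%nat /\ 0 < Rabs (INR q * alpha - IZR p) < d.
Proof.
  intros Hd.
  destruct (pow_lt_1_zero (/2) ltac:(rewrite Rabs_pos_eq; lra) d Hd) as [n Hn].
  destruct (small_comb alpha Hirr n) as (a & b & Hab).
  assert (Hn' : (/2)^n < d) by (specialize (Hn n (le_n _)); rewrite Rabs_pos_eq in Hn; [lra| apply pow_le; lra]).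
  assert (Hp : (/2) ^ n <= 1) by (apply pow_le1; lra).
  assert (Hb : b <> 0%Z) by (apply (comb_b_nz a b alpha); lra).
  destruct (Z_lt_le_dec 0 b) as [Hpos|Hneg].
  - exists (Z.to_nat b), (- a)%Z. split; [lia|].
    rewrite INR_IZR_INZ, Z2Nat.id by lia. rewrite opp_IZR.
    rewrite Rabs_pos_eq; lra.
  - exists (Z.to_nat (- b)), a. split; [lia|].
    rewrite INR_IZR_INZ, Z2Nat.id by lia. rewrite opp_IZR.
    rewrite Rabs_left; lra.
Qed.

Definition arcI (a L u : R) : R := if Rlt_dec (frac_part (u - a)) L then 1 else 0.
Definition iv (A B x : R) : R :=
  if Rle_dec A x then if Rlt_dec x B then 1 else 0 else 0.

Lemma arcI_01 a L u : 0 <= arcI a L u <= 1.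
Proof. unfold arcI; destruct Rlt_dec; lra. Qed.
Lemma iv_01 A B x : 0 <= iv A B x <= 1.
Proof. unfold iv; destruct Rle_dec; [destruct Rlt_dec|]; lra. Qed.

Lemma arcI_plus_Z a L u m : arcI a L (u + IZR m) = arcI a L u.
Proof.
  unfold arcI. replace (u + IZR m - a) with ((u - a) + IZR m) by ring.
  rewrite frac_plus_Z. auto.
Qed.

Lemma arcI_frac a L u : arcI a L (frac_part u) = arcI a L u.
Proof.
  unfold arcI. replace (frac_part u - a) with (frac_part u + - a) by ring.
  rewrite (frac_frac_plus u (-a)). replace (u + - a) with (u - a) by ring. auto.
Qed.

Lemma count_iv A B s J : 0 < s ->
  sumR J (fun j => iv A B (INR j * s)) <= Rmax 0 ((B - A) / s) + 1.
Proof.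
  intros Hs.
  set (C := fun J => sumR J (fun j => iv A B (INR j * s))).
  assert (Inv : forall J, C J = 0 \/ exists m, (m < J)%nat /\ A <= INR m * s < B /\
                        (C J - 1) * s <= INR m * s - A).
  { induction J0.
    - left; reflexivity.
    - assert (E : C (S J0) = C J0 + iv A B (INR J0 * s)) by reflexivity.
      rewrite E.
      destruct (Rle_dec A (INR J0 * s)) as [h1|h1];
        [destruct (Rlt_dec (INR J0 * s) B) as [h2|h2]|].
      + assert (Ei : iv A B (INR J0 * s) = 1) by (unfold iv; destruct Rle_dec; [destruct Rlt_dec|]; lra).
        rewrite Ei.
        right. exists J0. split; [lia|]. split; [lra|].
        destruct IHJ0 as [E0|(m & Hm & Hm1 & Hm2)].
        * rewrite E0. lra.
        * assert (INR m + 1 <= INR J0).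
          { rewrite <- S_INR. apply le_INR. lia. }
          nra.
      + assert (Ei : iv A B (INR J0 * s) = 0) by (unfold iv; destruct Rle_dec; try lra; destruct Rlt_dec; lra).
        rewrite Ei, Rplus_0_r. destruct IHJ0 as [E0|(m & Hm & Hm1 & Hm2)]; [left; auto|].
        right; exists m; repeat split; try lra; lia.
      + assert (Ei : iv A B (INR J0 * s) = 0) by (unfold iv; destruct Rle_dec; lra).
        rewrite Ei, Rplus_0_r. destruct IHJ0 as [E0|(m & Hm & Hm1 & Hm2)]; [left; auto|].
        right; exists m; repeat split; try lra; lia. }
  fold (C J). destruct (Inv J) as [E|(m & Hm & Hm1 & Hm2)].
  - rewrite E. pose proof (Rmax_l 0 ((B - A) / s)). lra.
  - assert (C J - 1 < (B - A) / s).
    { apply Rmult_lt_reg_r with s; auto. unfold Rdiv; rewrite Rmult_assoc, Rinv_l by lra. lra. }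
    pose proof (Rmax_r 0 ((B - A) / s)). lra.
Qed.

Lemma Rmax0_div X s : 0 < s -> Rmax 0 (X / s) = Rmax 0 X / s.
Proof.
  intros Hs. assert (0 < / s) by (apply Rinv_0_lt_compat; lra).
  unfold Rmax, Rdiv. destruct (Rle_dec 0 (X * / s)); destruct (Rle_dec 0 X); try nra.
Qed.

Lemma ap_count_pos a L c s J : 0 <= L <= 1 -> 0 < s -> INR J * s <= 1 ->
  sumR J (fun j => arcI a L (c + INR j * s)) <= L / s + 2.
Proof.
  intros HL Hs HJ.
  set (c0 := frac_part (c - a)).
  pose proof (frac_bounds (c - a)) as Hc0. fold c0 in Hc0.
  eapply Rle_trans.
  { apply (sumR_le J _ (fun j => iv 0 (L - c0) (INR j * s) +
                               iv (1 - c0) (Rmin (1 + L - c0) 1) (INR j * s))).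
    intros j Hj.
    assert (Hx : INR j * s < 1).
    { assert (INR j + 1 <= INR J) by (rewrite <- S_INR; apply le_INR; lia). nra. }
    assert (Hx0 : 0 <= INR j * s) by (apply Rmult_le_pos; [apply pos_INR|lra]).
    unfold arcI.
    replace (frac_part (c + INR j * s - a)) with (frac_part (c0 + INR j * s)).
    2:{ unfold c0. rewrite frac_frac_plus. f_equal; ring. }
    set (x := INR j * s) in *.
    pose proof (iv_01 0 (L - c0) x). pose proof (iv_01 (1 - c0) (Rmin (1 + L - c0) 1) x).
    destruct (Rlt_dec (frac_part (c0 + x)) L) as [Hlt|]; [|lra].
    destruct (Rlt_dec (c0 + x) 1) as [Hu|Hu].
    - rewrite frac_id in Hlt by lra.
      unfold iv at 1. destruct (Rle_dec 0 x); [|lra]. destruct (Rlt_dec x (L - c0)); lra.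
    - rewrite frac_shift1 in Hlt by lra.
      unfold iv at 2. destruct (Rle_dec (1 - c0) x); [|lra].
      destruct (Rlt_dec x (Rmin (1 + L - c0) 1)); [lra|].
      exfalso. apply n. apply Rmin_glb_lt; lra. }
  rewrite sumR_plus.
  pose proof (count_iv 0 (L - c0) s J Hs).
  pose proof (count_iv (1 - c0) (Rmin (1 + L - c0) 1) s J Hs).
  assert (Rmax 0 ((L - c0 - 0) / s) + Rmax 0 ((Rmin (1 + L - c0) 1 - (1 - c0)) / s) <= L / s).
  { rewrite !Rmax0_div by lra. unfold Rdiv.
    rewrite <- Rmult_plus_distr_r. apply Rmult_le_compat_r; [left; apply Rinv_0_lt_compat; lra|].
    unfold Rmax, Rmin. repeat destruct Rle_dec; lra. }
  lra.
Qed.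

Lemma ap_count a L c g J : 0 <= L <= 1 -> g <> 0 -> INR J * Rabs g <= 1 ->
  sumR J (fun j => arcI a L (c + INR j * g)) <= L / Rabs g + 2.
Proof.
  intros HL Hg HJ.
  destruct (Rlt_dec 0 g) as [Hp|Hn].
  - rewrite Rabs_pos_eq in * by lra. apply ap_count_pos; auto.
  - rewrite Rabs_left in * by lra.
    rewrite sumR_rev.
    destruct J as [|J]; [simpl; assert (0 <= L / - g) by (apply Rmult_le_pos; [lra| left; apply Rinv_0_lt_compat; lra]); lra|].
    rewrite (sumR_ext _ _ (fun j => arcI a L ((c + INR J * g) + INR j * (- g)))).
    + apply ap_count_pos; auto; lra.
    + intros k Hk. f_equal. rewrite minus_INR by lia. rewrite minus_INR by lia.
      rewrite S_INR. simpl. ring.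
Qed.

Lemma sumR_mono_len F m n : (forall k, 0 <= F k) -> (m <= n)%nat -> sumR m F <= sumR n F.
Proof.
  intros H Hmn. replace n with (m + (n - m))%nat by lia.
  rewrite sumR_split. assert (0 <= sumR (n - m) (fun k => F (m + k)%nat)) by (apply sumR_nonneg; auto).
  lra.
Qed.

Lemma exists_J s : 0 < s -> exists J : nat, INR J * s <= 1 < (INR J + 1) * s.
Proof.
  intros Hs. pose proof (base_Int_part (/ s)) as [H1 H2].
  assert (Hi : 0 < / s) by (apply Rinv_0_lt_compat; lra).
  assert (Hz : (0 <= Int_part (/ s))%Z).
  { assert (H0 : IZR (-1) < IZR (Int_part (/ s))) by (simpl; lra).
    apply lt_IZR in H0. lia. }
  exists (Z.to_nat (Int_part (/ s))).
  rewrite INR_IZR_INZ, Z2Nat.id by auto.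
  split.
  - apply Rmult_le_compat_r with (r := s) in H1; [|lra]. rewrite Rinv_l in H1; lra.
  - assert (/ s < IZR (Int_part (/ s)) + 1) by lra.
    apply Rmult_lt_compat_r with (r := s) in H; [|lra]. rewrite Rinv_l in H; lra.
Qed.

Lemma exists_N (x : R) : exists N : nat, x <= INR N.
Proof.
  destruct (archimed x) as [H1 _].
  exists (Z.to_nat (up x)).
  destruct (Z_lt_le_dec (up x) 0).
  - pose proof (pos_INR (Z.to_nat (up x))).
    assert (IZR (up x) <= IZR (-1)) by (apply IZR_le; lia). simpl in *. lra.
  - rewrite INR_IZR_INZ, Z2Nat.id by lia. lra.
Qed.

Lemma upper_ind alpha (Hirr : irrational alpha) a L : 0 <= L <= 1 ->
  forall eps, 0 < eps -> exists N : nat, forall n w, (N <= n)%nat ->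
    sumR n (fun k => arcI a L (w + INR k * alpha)) <= INR n * (L + eps).
Proof.
  intros HL eps0 Heps0.
  set (e := Rmin eps0 1).
  assert (He : 0 < e <= 1) by (unfold e, Rmin; destruct Rle_dec; lra).
  assert (Hee : e <= eps0) by (unfold e; apply Rmin_l).
  cut (exists N : nat, forall n w, (N <= n)%nat ->
    sumR n (fun k => arcI a L (w + INR k * alpha)) <= INR n * (L + e)).
  { intros [N HN]; exists N; intros n w Hn. eapply Rle_trans; [apply HN; auto|].
    apply Rmult_le_compat_l; [apply pos_INR| lra]. }
  destruct (small_gamma alpha Hirr (e / 8) ltac:(lra)) as (q & p & Hq & Hg).
  set (g := INR q * alpha - IZR p) in *.
  set (s := Rabs g) in *.
  assert (Hg0 : g <> 0) by (intros E; unfold s in Hg; rewrite E, Rabs_R0 in Hg; lra).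
  destruct (exists_J s ltac:(lra)) as [J [HJ1 HJ2]].
  assert (HJpos : 0 < INR J).
  { destruct J; [simpl in HJ2; lra|]. apply lt_0_INR; lia. }
  destruct (exists_N (2 * INR J * INR q / e)) as [N HN].
  exists N. intros n w Hn.
  set (G := fun k => arcI a L (w + INR k * alpha)).
  change (sumR n G <= INR n * (L + e)).
  assert (HG01 : forall k, 0 <= G k <= 1) by (intros; apply arcI_01).
  assert (ClaimA : forall j, sumR n G <= sumR n (fun k => G (j * q + k)%nat) + INR (j * q)).
  { intros j.
    assert (E1 : sumR (j * q + n) G = sumR (j * q) G + sumR n (fun k => G (j * q + k)%nat))
      by apply sumR_split.
    assert (E2 : sumR n G <= sumR (j * q + n) G)
      by (apply sumR_mono_len; [intros; apply HG01| lia]).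
    assert (E3 : sumR (j * q) G <= INR (j * q)).
    { rewrite <- (Rmult_1_r (INR (j * q))), <- sumR_const.
      apply sumR_le; intros; apply HG01. }
    lra. }
  assert (ClaimB : forall k, sumR J (fun j => G (j * q + k)%nat) <= L / s + 2).
  { intros k.
    rewrite (sumR_ext _ _ (fun j => arcI a L ((w + INR k * alpha) + INR j * g))).
    - apply ap_count; auto.
    - intros j Hj. unfold G.
      rewrite <- (arcI_plus_Z a L (w + INR k * alpha + INR j * g) (Z.of_nat j * p)).
      f_equal. rewrite plus_INR, mult_INR, mult_IZR, <- INR_IZR_INZ. unfold g. ring. }
  assert (Hsum : INR J * sumR n G <=
                 INR n * (L / s + 2) + INR J * (INR J * INR q)).
  { rewrite <- sumR_const.
    eapply Rle_trans.
    { apply (sumR_le J _ (fun j => sumR n (fun k => G (j * q + k)%nat) + INR (j * q))).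
      intros j _. apply ClaimA. }
    rewrite sumR_plus. apply Rplus_le_compat.
    - rewrite sumR_swap. rewrite <- sumR_const. apply sumR_le. intros k _. apply ClaimB.
    - rewrite <- sumR_const. apply sumR_le. intros j Hj.
      rewrite mult_INR. apply Rmult_le_compat_r; [apply pos_INR|]. apply le_INR; lia. }
  assert (Hs : 0 < s < e / 8) by lra.
  assert (Hstar : L / s + 2 <= INR J * (L + e / 2)).
  { apply Rmult_le_reg_r with s; [lra|].
    unfold Rdiv. rewrite Rmult_plus_distr_r, Rmult_assoc, Rinv_l by lra.
    assert (INR J * s > 1 - s) by lra. nra. }
  assert (Hn' : INR N <= INR n) by (apply le_INR; auto).
  assert (HJq : INR J * INR q <= INR n * (e / 2)).
  { assert (2 * INR J * INR q / e * e = 2 * (INR J * INR q)) by (field; lra).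
    assert (2 * INR J * INR q / e <= INR n) by lra.
    assert (2 * INR J * INR q / e * e <= INR n * e) by (apply Rmult_le_compat_r; lra).
    lra. }
  assert (Hnn : 0 <= INR n) by apply pos_INR.
  assert (INR J * sumR n G <= INR J * (INR n * (L + e))).
  { eapply Rle_trans; [apply Hsum|].
    assert (INR n * (L / s + 2) <= INR n * (INR J * (L + e / 2))) by (apply Rmult_le_compat_l; auto).
    assert (INR J * (INR J * INR q) <= INR J * (INR n * (e / 2))) by (apply Rmult_le_compat_l; lra).
    nra. }
  apply Rmult_le_reg_l with (INR J); auto.
Qed.

Definition avg (alpha : R) (h : R -> R) (n : nat) (w : R) : R :=
  / INR n * sumR n (fun k => h (frac_part (w + INR k * alpha))).

Definition Wg (alpha : R) (h : R -> R) (c : R) : Prop :=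
  forall eps, 0 < eps -> exists N : nat, forall n w, (N <= n)%nat ->
    Rabs (avg alpha h n w - c) <= eps.

Lemma Rabs_le_inv a b : Rabs a <= b -> - b <= a <= b.
Proof. unfold Rabs; destruct Rcase_abs; intros; lra. Qed.

Lemma div_le n x y : 0 < n -> x <= n * y -> / n * x <= y.
Proof.
  intros Hn H. apply Rmult_le_reg_l with n; auto. rewrite <- Rmult_assoc, Rinv_r by lra. lra.
Qed.
Lemma div_ge n x y : 0 < n -> n * y <= x -> y <= / n * x.
Proof.
  intros Hn H. apply Rmult_le_reg_l with n; auto. rewrite <- Rmult_assoc, Rinv_r by lra. lra.
Qed.

Section W.
Variable alpha : R.

Lemma Wg_N1 h c : Wg alpha h c -> forall eps, 0 < eps -> exists N : nat, (1 <= N)%nat /\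
   forall n w, (N <= n)%nat -> Rabs (avg alpha h n w - c) <= eps.
Proof.
  intros H eps He. destruct (H eps He) as [N HN]. exists (S N). split; [lia|].
  intros; apply HN; lia.
Qed.

Lemma Wg_ext h1 h2 c : (forall t, 0 <= t < 1 -> h1 t = h2 t) -> Wg alpha h1 c -> Wg alpha h2 c.
Proof.
  intros E H eps He. destruct (H eps He) as [N HN]. exists N. intros n w Hn.
  unfold avg. rewrite (sumR_ext _ _ (fun k => h1 (frac_part (w + INR k * alpha)))).
  - apply HN; auto.
  - intros k _. symmetry; apply E. apply frac_bounds.
Qed.

Lemma avg_lin h1 h2 l n w :
  avg alpha (fun t => h1 t + l * h2 t) n w = avg alpha h1 n w + l * avg alpha h2 n w.
Proof.
  unfold avg. rewrite sumR_plus, sumR_scal. ring.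
Qed.

Lemma Wg_lin h1 h2 c1 c2 l : Wg alpha h1 c1 -> Wg alpha h2 c2 ->
  Wg alpha (fun t => h1 t + l * h2 t) (c1 + l * c2).
Proof.
  intros H1 H2 eps He.
  set (e := eps / (2 * (Rabs l + 1))).
  assert (Hl : 0 <= Rabs l) by apply Rabs_pos.
  assert (He' : 0 < e) by (unfold e; apply Rdiv_lt_0_compat; lra).
  destruct (H1 e He') as [N1 HN1]. destruct (H2 e He') as [N2 HN2].
  exists (max N1 N2). intros n w Hn. rewrite avg_lin.
  specialize (HN1 n w ltac:(lia)). specialize (HN2 n w ltac:(lia)).
  replace (avg alpha h1 n w + l * avg alpha h2 n w - (c1 + l * c2))
    with ((avg alpha h1 n w - c1) + l * (avg alpha h2 n w - c2)) by ring.
  eapply Rle_trans; [apply Rabs_triang|]. rewrite Rabs_mult.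
  assert (Rabs l * Rabs (avg alpha h2 n w - c2) <= Rabs l * e)
    by (apply Rmult_le_compat_l; auto).
  assert (e + Rabs l * e <= eps).
  { unfold e. assert (eps / (2 * (Rabs l + 1)) * (Rabs l + 1) = eps / 2) by (field; lra).
    nra. }
  lra.
Qed.

Lemma avg_const c n w : (1 <= n)%nat -> avg alpha (fun _ => c) n w = c.
Proof.
  intros Hn. unfold avg. rewrite sumR_const. field.
  apply not_0_INR; lia.
Qed.

Lemma Wg_const c : Wg alpha (fun _ => c) c.
Proof.
  intros eps He. exists 1%nat. intros n w Hn. rewrite avg_const by auto.
  rewrite Rminus_diag, Rabs_R0; lra.
Qed.

Lemma avg_le h1 h2 n w : (forall t, 0 <= t < 1 -> h1 t <= h2 t) ->
  avg alpha h1 n w <= avg alpha h2 n w.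
Proof.
  intros H. unfold avg. apply Rmult_le_compat_l.
  - destruct n; [simpl; rewrite Rinv_0; lra|]. left; apply Rinv_0_lt_compat, lt_0_INR; lia.
  - apply sumR_le; intros; apply H, frac_bounds.
Qed.

Lemma Wg_sandwich h c :
  (forall eps, 0 < eps -> exists l u cl cu, Wg alpha l cl /\ Wg alpha u cu /\
     (forall t, 0 <= t < 1 -> l t <= h t <= u t) /\ cl <= c <= cu /\ cu - cl <= eps) ->
  Wg alpha h c.
Proof.
  intros H eps He.
  destruct (H (eps / 2) ltac:(lra)) as (l & u & cl & cu & Hl & Hu & Hlu & Hc & Hd).
  destruct (Hl (eps / 2) ltac:(lra)) as [N1 HN1].
  destruct (Hu (eps / 2) ltac:(lra)) as [N2 HN2].
  exists (max N1 N2). intros n w Hn.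
  specialize (HN1 n w ltac:(lia)). specialize (HN2 n w ltac:(lia)).
  pose proof (avg_le l h n w ltac:(intros; apply Hlu; auto)).
  pose proof (avg_le h u n w ltac:(intros; apply Hlu; auto)).
  apply Rabs_le. apply Rabs_le_inv in HN1. apply Rabs_le_inv in HN2. lra.
Qed.

Lemma Wg_unique h c1 c2 : Wg alpha h c1 -> Wg alpha h c2 -> c1 = c2.
Proof.
  intros H1 H2. apply Rle_antisym; apply Rnot_lt_le; intros Hlt.
  - destruct (H1 ((c1 - c2) / 3) ltac:(lra)) as [N1 HN1].
    destruct (H2 ((c1 - c2) / 3) ltac:(lra)) as [N2 HN2].
    specialize (HN1 (max N1 N2) 0 ltac:(lia)). specialize (HN2 (max N1 N2) 0 ltac:(lia)).
    apply Rabs_le_inv in HN1. apply Rabs_le_inv in HN2. lra.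
  - destruct (H1 ((c2 - c1) / 3) ltac:(lra)) as [N1 HN1].
    destruct (H2 ((c2 - c1) / 3) ltac:(lra)) as [N2 HN2].
    specialize (HN1 (max N1 N2) 0 ltac:(lia)). specialize (HN2 (max N1 N2) 0 ltac:(lia)).
    apply Rabs_le_inv in HN1. apply Rabs_le_inv in HN2. lra.
Qed.

Lemma Wg_shift h c th : Wg alpha h c -> Wg alpha (fun t => h (frac_part (t + th))) c.
Proof.
  intros H eps He. destruct (H eps He) as [N HN]. exists N. intros n w Hn.
  specialize (HN n (w + th) Hn). unfold avg in *.
  rewrite (sumR_ext _ _ (fun k => h (frac_part (w + th + INR k * alpha)))); auto.
  intros k _. f_equal. rewrite frac_frac_plus. f_equal; ring.
Qed.

Lemma arcI_compl a L u : 0 <= L <= 1 -> arcI a L u + arcI (a + L) (1 - L) u = 1.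
Proof.
  intros HL. unfold arcI.
  pose proof (frac_bounds (u - a)) as Hv.
  replace (u - (a + L)) with (u - a + - L) by ring.
  rewrite <- (frac_frac_plus (u - a) (- L)).
  set (v := frac_part (u - a)) in *.
  destruct (Rlt_dec v L) as [h|h].
  - rewrite <- (frac_plus_Z (v + - L) 1). simpl IZR.
    rewrite frac_id by lra. destruct Rlt_dec; lra.
  - rewrite frac_id by lra. destruct Rlt_dec; lra.
Qed.

Hypothesis Hirr : irrational alpha.

Lemma Wg_box a b : 0 <= a <= b -> b <= 1 -> Wg alpha (iv a b) (b - a).
Proof.
  intros Hab Hb.
  set (L := b - a).
  assert (HL : 0 <= L <= 1) by (unfold L; lra).
  assert (E : forall n w, avg alpha (iv a b) n w =
                  / INR n * sumR n (fun k => arcI a L (w + INR k * alpha))).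
  { intros n w. unfold avg. f_equal. apply sumR_ext. intros k _.
    rewrite <- arcI_frac.
    pose proof (frac_bounds (w + INR k * alpha)) as Ht.
    set (t := frac_part (w + INR k * alpha)) in *.
    unfold iv, arcI.
    destruct (Rle_dec a t) as [h1|h1].
    - rewrite frac_id by lra. unfold L. destruct Rlt_dec; destruct Rlt_dec; lra.
    - rewrite <- (frac_plus_Z (t - a) 1). simpl IZR. rewrite frac_id by lra.
      unfold L. destruct Rlt_dec; lra. }
  intros eps He.
  destruct (upper_ind alpha Hirr a L HL eps He) as [N1 HN1].
  assert (HL' : 0 <= 1 - L <= 1) by lra.
  destruct (upper_ind alpha Hirr (a + L) (1 - L) HL' eps He) as [N2 HN2].
  exists (max 1 (max N1 N2)). intros n w Hn.
  specialize (HN1 n w ltac:(lia)). specialize (HN2 n w ltac:(lia)).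
  rewrite E.
  assert (Hn0 : 0 < INR n) by (apply lt_0_INR; lia).
  assert (Hc : sumR n (fun k => arcI a L (w + INR k * alpha)) =
               INR n - sumR n (fun k => arcI (a + L) (1 - L) (w + INR k * alpha))).
  { rewrite <- (Rmult_1_r (INR n)), <- sumR_const.
    apply Rplus_eq_reg_r with (sumR n (fun k => arcI (a + L) (1 - L) (w + INR k * alpha))).
    rewrite <- sumR_plus. ring_simplify. apply sumR_ext. intros k _. apply arcI_compl; auto. }
  fold L. apply Rabs_le. split.
  - rewrite Hc. assert (INR n * (L - eps) <= INR n - sumR n (fun k => arcI (a + L) (1 - L) (w + INR k * alpha))) by lra.
    pose proof (div_ge _ _ _ Hn0 H). lra.
  - pose proof (div_le _ _ _ Hn0 HN1). lra.
Qed.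

Definition pt (a t : R) : R := if Req_EM_T t a then 1 else 0.

Lemma Wg_zero : Wg alpha (fun _ => 0) 0.
Proof. apply Wg_const. Qed.

Lemma Wg_pt a : 0 <= a <= 1 -> Wg alpha (pt a) 0.
Proof.
  intros Ha. apply Wg_sandwich. intros eps He.
  set (lo := Rmax 0 (a - eps / 4)). set (hi := Rmin 1 (a + eps / 4)).
  exists (fun _ => 0), (iv lo hi), 0, (hi - lo).
  assert (Hlo : 0 <= lo <= a) by (unfold lo, Rmax; destruct Rle_dec; lra).
  assert (Hhi : a <= hi <= 1 /\ hi <= a + eps / 4) by (unfold hi, Rmin; destruct Rle_dec; lra).
  assert (lo >= a - eps / 4) by (unfold lo, Rmax; destruct Rle_dec; lra).
  split; [apply Wg_zero|]. split; [apply Wg_box; lra|].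
  split; [|lra].
  intros t Ht. unfold pt, iv. destruct Req_EM_T as [e|e].
  - subst t. destruct Rle_dec; [|lra]. destruct Rlt_dec; [lra|].
    exfalso. apply n. unfold hi, Rmin. destruct Rle_dec; lra.
  - destruct Rle_dec; [destruct Rlt_dec|]; lra.
Qed.

End W.

Section W2.
Variable alpha : R.
Hypothesis Hirr : irrational alpha.

Lemma Wg_eqc h c1 c2 : c1 = c2 -> Wg alpha h c1 -> Wg alpha h c2.
Proof. intros ->; auto. Qed.

Lemma Wg_adapted : forall l lf a b s, adapted_couple s a b l lf -> 0 <= a <= b -> b <= 1 ->
  Wg alpha (fun t => iv a b t * s t) (Int_SF lf l).
Proof.
  induction l as [|r l IH]; intros lf a b s Had Hab Hb.
  - destruct Had as (_ & _ & _ & Hlen & _). simpl in Hlen. discriminate.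
  - destruct l as [|r2 l'].
    + destruct Had as (Hord & H0 & H1 & Hlen & _).
      destruct lf; [|simpl in Hlen; discriminate].
      simpl in H0, H1. rewrite Rmin_left in H0 by lra. rewrite Rmax_right in H1 by lra.
      simpl. apply (Wg_ext alpha (fun _ => 0)); [|apply Wg_const].
      intros t _. unfold iv. destruct Rle_dec; [destruct Rlt_dec|]; lra.
    + destruct lf as [|v lf']; [destruct Had as (_ & _ & _ & Hlen & _); simpl in Hlen; discriminate|].
      assert (Had' : adapted_couple s r2 b (r2 :: l') lf') by (eapply StepFun_P7; [|exact Had]; lra).
      destruct Had as (Hord & H0 & H1 & Hlen & Hc).
      simpl in H0. rewrite Rmin_left in H0 by lra. subst r.
      assert (Hr2a : a <= r2) by (apply (Hord 0%nat); simpl; lia).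
      assert (Hr2b : r2 <= b).
      { rewrite <- (Rmax_right a b) by lra. rewrite <- H1. apply RList_P7; auto. simpl; auto. }
      specialize (IH lf' r2 b s Had' ltac:(lra) Hb).
      assert (Hv : forall t, a < t < r2 -> s t = v).
      { intros t Ht. apply (Hc 0%nat); [simpl; lia|]. unfold open_interval; simpl; lra. }
      set (q := fun t => if Rlt_dec a r2 then pt a t else 0).
      assert (Wq : Wg alpha q 0).
      { unfold q. destruct Rlt_dec.
        - apply (Wg_pt alpha Hirr); lra.
        - apply Wg_const. }
      pose proof (Wg_box alpha Hirr a r2 ltac:(lra) ltac:(lra)) as Wb.
      pose proof (Wg_lin alpha _ _ _ _ v (Wg_const alpha 0) Wb) as W1.
      pose proof (Wg_lin alpha _ _ _ _ (s a - v) W1 Wq) as W2.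
      pose proof (Wg_lin alpha _ _ _ _ 1 W2 IH) as W3.
      simpl Int_SF.
      eapply Wg_eqc; [|eapply Wg_ext; [|exact W3]].
      * ring.
      * intros t Ht. cbv beta. unfold q, pt, iv.
        repeat match goal with
        | |- context [Rle_dec ?x ?y] => destruct (Rle_dec x y)
        | |- context [Rlt_dec ?x ?y] => destruct (Rlt_dec x y)
        | |- context [Req_EM_T ?x ?y] => destruct (Req_EM_T x y)
        end; try lra; try (subst; lra); try (rewrite (Hv t) by lra; lra).
Qed.

End W2.

Lemma SF_diff_bound a b (p1 p2 q1 q2 : StepFun a b) : a <= b ->
  (forall t, a <= t <= b -> Rabs (p1 t - p2 t) <= q1 t + q2 t) ->
  Rabs (RiemannInt_SF p1 - RiemannInt_SF p2) <= RiemannInt_SF q1 + RiemannInt_SF q2.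
Proof.
  intros Hab H.
  set (X := mkStepFun (StepFun_P28 (-1) p1 p2)).
  set (X' := mkStepFun (StepFun_P28 (-1) p2 p1)).
  set (Y := mkStepFun (StepFun_P28 1 q1 q2)).
  assert (E1 : RiemannInt_SF X = RiemannInt_SF p1 + -1 * RiemannInt_SF p2) by apply StepFun_P30.
  assert (E2 : RiemannInt_SF X' = RiemannInt_SF p2 + -1 * RiemannInt_SF p1) by apply StepFun_P30.
  assert (E3 : RiemannInt_SF Y = RiemannInt_SF q1 + 1 * RiemannInt_SF q2) by apply StepFun_P30.
  assert (I1 : RiemannInt_SF X <= RiemannInt_SF Y).
  { apply StepFun_P37; auto. intros x Hx. simpl.
    specialize (H x ltac:(lra)). apply Rabs_le_inv in H. lra. }
  assert (I2 : RiemannInt_SF X' <= RiemannInt_SF Y).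
  { apply StepFun_P37; auto. intros x Hx. simpl.
    specialize (H x ltac:(lra)). apply Rabs_le_inv in H. lra. }
  apply Rabs_le. lra.
Qed.

Lemma RI_approx h a b (pr : Riemann_integrable h a b) (phi psi : StepFun a b) :
  a <= b -> (forall t, a <= t <= b -> Rabs (h t - phi t) <= psi t) ->
  Rabs (RiemannInt pr - RiemannInt_SF phi) <= RiemannInt_SF psi.
Proof.
  intros Hab H.
  unfold RiemannInt. destruct (RiemannInt_exists pr RinvN RinvN_cv) as [l Hl].
  assert (Key : forall N, Rabs (RiemannInt_SF (phi_sequence RinvN pr N) - RiemannInt_SF phi)
                          <= RinvN N + RiemannInt_SF psi).
  { intros N. destruct (phi_sequence_prop RinvN pr N) as [psiN [HN1 HN2]].
    eapply Rle_trans.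
    - apply (SF_diff_bound a b _ _ psiN psi Hab).
      intros t Ht. rewrite Rmin_left in HN1 by lra. rewrite Rmax_right in HN1 by lra.
      specialize (HN1 t Ht). specialize (H t Ht).
      replace (phi_sequence RinvN pr N t - phi t) with
        (- (h t - phi_sequence RinvN pr N t) + (h t - phi t)) by ring.
      eapply Rle_trans; [apply Rabs_triang|]. rewrite Rabs_Ropp. lra.
    - pose proof (Rle_abs (RiemannInt_SF psiN)). lra. }
  apply Rnot_lt_le. intros Hlt.
  set (d := Rabs (l - RiemannInt_SF phi) - RiemannInt_SF psi).
  assert (Hd2 : d / 2 > 0) by (unfold d; lra).
  destruct (Hl _ Hd2) as [N1 HN1].
  destruct (RinvN_cv Hd2) as [N2 HN2].
  specialize (HN1 (max N1 N2) ltac:(lia)). specialize (HN2 (max N1 N2) ltac:(lia)).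
  unfold Rdist, R_dist in *. rewrite Rminus_0_r in HN2.
  specialize (Key (max N1 N2)).
  pose proof (Rle_abs (RinvN (max N1 N2))).
  assert (Rabs (l - RiemannInt_SF phi) <=
          Rabs (l - RiemannInt_SF (phi_sequence RinvN pr (max N1 N2))) +
          Rabs (RiemannInt_SF (phi_sequence RinvN pr (max N1 N2)) - RiemannInt_SF phi)).
  { replace (l - RiemannInt_SF phi) with
      ((l - RiemannInt_SF (phi_sequence RinvN pr (max N1 N2))) +
       (RiemannInt_SF (phi_sequence RinvN pr (max N1 N2)) - RiemannInt_SF phi)) at 1 by ring.
    apply Rabs_triang. }
  rewrite Rabs_minus_sym in HN1.
  unfold d in *. lra.
Qed.

Section W3.
Variable alpha : R.
Hypothesis Hirr : irrational alpha.

Lemma Wg_SF (s : StepFun 0 1) : Wg alpha s (RiemannInt_SF s).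
Proof.
  assert (E : RiemannInt_SF s = Int_SF (subdivision_val s) (subdivision s)).
  { unfold RiemannInt_SF. destruct Rle_dec; [auto| lra]. }
  rewrite E.
  eapply Wg_ext; [|apply (Wg_adapted alpha Hirr _ _ 0 1 s (StepFun_P1 s)); lra].
  intros t Ht. cbv beta. unfold iv. destruct Rle_dec; [|lra]. destruct Rlt_dec; lra.
Qed.

Lemma Wg_RI h (pr : Riemann_integrable h 0 1) : Wg alpha h (RiemannInt pr).
Proof.
  apply Wg_sandwich. intros eps He.
  destruct (pr (mkposreal (eps / 4) ltac:(lra))) as [phi [psi [H1 H2]]].
  simpl in H2. rewrite Rmin_left, Rmax_right in H1 by lra.
  set (l := mkStepFun (StepFun_P28 (-1) phi psi)).
  set (u := mkStepFun (StepFun_P28 1 phi psi)).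
  assert (El : RiemannInt_SF l = RiemannInt_SF phi + -1 * RiemannInt_SF psi) by apply StepFun_P30.
  assert (Eu : RiemannInt_SF u = RiemannInt_SF phi + 1 * RiemannInt_SF psi) by apply StepFun_P30.
  exists l, u, (RiemannInt_SF l), (RiemannInt_SF u).
  split; [apply Wg_SF|]. split; [apply Wg_SF|].
  pose proof (RI_approx h 0 1 pr phi psi ltac:(lra) H1) as HA.
  apply Rabs_le_inv in HA.
  pose proof (Rle_abs (RiemannInt_SF psi)).
  split; [|lra].
  intros t Ht. specialize (H1 t ltac:(lra)). apply Rabs_le_inv in H1. simpl. lra.
Qed.

End W3.

Lemma subdiv_comb (a b : R) (H : R -> R -> R) (f g : R -> R) (l1 : list R) :
  is_subdivision f a b l1 -> is_subdivision g a b l1 ->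
  is_subdivision (fun x => H (f x) (g x)) a b l1.
Proof.
  intros (x0,(H0,(H1,(H2,(H3,H4))))) (x,(_,(_,(_,(_,H9))))).
  exists (FF l1 (fun x => H (f x) (g x))); repeat split.
  1,2,3:assumption.
  - apply StepFun_P20; rewrite H3; auto with arith.
  - intros i H8 x1 H10; unfold open_interval in H10, H9, H4.
      rewrite (H9 _ H8 _ H10); rewrite (H4 _ H8 _ H10).
      assert (H11 : l1 <> nil).
    { red; intro H11; rewrite H11 in H8; elim (Nat.nlt_0_r _ H8). }
    destruct (RList_P19 _ H11) as (r,(r0,H12)).
      rewrite H12; unfold FF.
      change
        (H (pos_Rl x0 i) (pos_Rl x i) =
           pos_Rl
             (List.map (fun x2:R => H (f x2) (g x2)) (mid_Rlist (cons r r0) r))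
             (S i)); rewrite RList_P12.
    { rewrite RList_P13.
      { rewrite <- H12. rewrite (H9 _ H8); [rewrite (H4 _ H8); [reflexivity|]|]; lra. }
      rewrite <- H12; assumption. }
    rewrite RList_P14; simpl; rewrite H12 in H8; simpl in H8;
      apply -> Nat.succ_lt_mono; apply H8.
Qed.

Lemma SF_comb a b (H : R -> R -> R) f g :
  IsStepFun f a b -> IsStepFun g a b -> IsStepFun (fun x => H (f x) (g x)) a b.
Proof.
  intros [lf Hf] [lg Hg]. exists (cons_ORlist lf lg).
  apply subdiv_comb; [apply StepFun_P23 with g | apply StepFun_P25 with f]; assumption.
Qed.

Lemma SF_trans h a b d a' b' : a <= b -> a' = a - d -> b' = b - d ->
  IsStepFun h a b -> IsStepFun (fun t => h (t + d)) a' b'.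
Proof.
  intros Hab -> -> [l [lf (Hord & H0 & H1 & Hlen & Hc)]].
  exists (List.map (fun x => x - d) l). exists lf.
  assert (Hl : (0 < length l)%nat) by (rewrite Hlen; lia).
  repeat split.
  - intros i Hi. rewrite List.length_map in Hi. rewrite !RList_P12 by lia.
    specialize (Hord i Hi). lra.
  - rewrite RList_P12 by lia. rewrite H0. rewrite !Rmin_left by lra. ring.
  - rewrite List.length_map. rewrite RList_P12 by lia. rewrite H1. rewrite !Rmax_right by lra. ring.
  - rewrite List.length_map; auto.
  - intros i Hi x Hx. rewrite List.length_map in Hi. unfold open_interval in Hx.
    rewrite !RList_P12 in Hx by lia.
    apply (Hc i Hi). unfold open_interval. lra.
Qed.

Lemma SF_ext_open h h' a b : a <= b -> (forall x, a < x < b -> h x = h' x) ->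
  IsStepFun h a b -> IsStepFun h' a b.
Proof.
  intros Hab E [l [lf (Hord & H0 & H1 & Hlen & Hc)]].
  exists l. exists lf. repeat split; auto.
  intros i Hi x Hx. unfold open_interval in Hx.
  rewrite <- E.
  - apply (Hc i Hi). auto.
  - rewrite Rmin_left in H0 by lra. rewrite Rmax_right in H1 by lra.
    pose proof (proj1 (RList_P6 l) Hord) as Hm.
    assert (pos_Rl l 0 <= pos_Rl l i) by (apply Hm; lia).
    assert (pos_Rl l (S i) <= pos_Rl l (pred (length l))) by (apply Hm; lia).
    lra.
Qed.

Lemma SF_rot s th : IsStepFun s 0 1 -> IsStepFun (fun t => s (frac_part (t + th))) 0 1.
Proof.
  intros Hs.
  set (d := frac_part th).
  pose proof (frac_bounds th) as Hd. fold d in Hd.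
  assert (Efr : forall t, frac_part (t + th) = frac_part (t + d)).
  { intros t. unfold d. rewrite (Rplus_comm t (frac_part th)), frac_frac_plus. f_equal; ring. }
  apply StepFun_P46 with (1 - d).
  - assert (H1 : IsStepFun s d 1) by (apply StepFun_P45 with 0; auto; lra).
    assert (H2 : IsStepFun (fun t => s (t + d)) 0 (1 - d)) by (apply (SF_trans s d 1 d); auto; lra).
    apply (SF_ext_open (fun t => s (t + d)) _ 0 (1 - d)); auto; [lra|].
    intros x Hx. rewrite Efr, frac_id by lra. auto.
  - assert (H1 : IsStepFun s 0 d) by (apply StepFun_P44 with 1; auto; lra).
    assert (H2 : IsStepFun (fun t => s (t + - (1 - d))) (1 - d) 1)
      by (apply (SF_trans s 0 d); auto; lra).
    apply (SF_ext_open (fun t => s (t + - (1 - d))) _ (1 - d) 1); auto; [lra|].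
    intros x Hx. rewrite Efr, frac_shift1 by lra. f_equal; ring.
Qed.

Fixpoint sabs (l : list R) : R := match l with nil => 0 | x :: l' => Rabs x + sabs l' end.

Lemma sabs_nonneg l : 0 <= sabs l.
Proof. induction l; simpl; [lra|]. pose proof (Rabs_pos a). lra. Qed.

Lemma sabs_in l x : In x l -> Rabs x <= sabs l.
Proof.
  induction l; simpl; [tauto|]. intros [->|H].
  - pose proof (sabs_nonneg l). lra.
  - pose proof (Rabs_pos a). specialize (IHl H). lra.
Qed.

Lemma adapted_bound : forall l lf a b s, adapted_couple s a b l lf -> a <= b ->
  forall t, a <= t <= b -> Rabs (s t) <= sabs lf + sabs (List.map s l).
Proof.
  induction l as [|r l IH]; intros lf a b s Had Hab t Ht.
  - destruct Had as (_ & _ & _ & Hlen & _). simpl in Hlen. discriminate.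
  - pose proof (sabs_nonneg lf).
    destruct l as [|r2 l'].
    + destruct Had as (Hord & H0 & H1 & Hlen & _).
      simpl in H0, H1. rewrite Rmin_left in H0 by lra. rewrite Rmax_right in H1 by lra.
      assert (t = r) by lra. subst t. simpl. pose proof (sabs_nonneg nil). simpl. lra.
    + destruct lf as [|v lf']; [destruct Had as (_ & _ & _ & Hlen & _); simpl in Hlen; discriminate|].
      assert (Had' : adapted_couple s r2 b (r2 :: l') lf') by (eapply StepFun_P7; [|exact Had]; lra).
      destruct Had as (Hord & H0 & H1 & Hlen & Hc).
      simpl in H0. rewrite Rmin_left in H0 by lra. subst r.
      assert (Hr2a : a <= r2) by (apply (Hord 0%nat); simpl; lia).
      assert (Hr2b : r2 <= b).
      { rewrite <- (Rmax_right a b) by lra. rewrite <- H1. apply RList_P7; auto. simpl; auto. }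
      simpl sabs. simpl List.map. simpl sabs.
      pose proof (Rabs_pos v). pose proof (Rabs_pos (s a)). pose proof (Rabs_pos (s r2)).
      pose proof (sabs_nonneg lf'). pose proof (sabs_nonneg (List.map s l')).
      destruct (Rle_dec r2 t).
      * specialize (IH lf' r2 b s Had' Hr2b t ltac:(lra)). simpl in IH. lra.
      * destruct (Req_dec t a) as [->|Hta]; [lra|].
        assert (s t = v) by (apply (Hc 0%nat); [simpl; lia| unfold open_interval; simpl; lra]).
        rewrite H6. lra.
Qed.

Definition SFbound a b (s : StepFun a b) : R :=
  sabs (subdivision_val s) + sabs (List.map s (subdivision s)).

Lemma SFbound_spec a b (s : StepFun a b) : a <= b ->
  forall t, a <= t <= b -> Rabs (s t) <= SFbound a b s.
Proof.
  intros Hab t Ht. apply (adapted_bound _ _ a b); auto. apply StepFun_P1.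
Qed.

Definition clampB (B x : R) : R := Rmax (- B) (Rmin B x).

Lemma clampB_bound B x : 0 <= B -> Rabs (clampB B x) <= B.
Proof. intros HB. unfold clampB, Rmax, Rmin. repeat destruct Rle_dec; apply Rabs_le; lra. Qed.

Lemma clampB_close B x y : Rabs y <= B -> Rabs (y - clampB B x) <= Rabs (y - x).
Proof.
  intros Hy. apply Rabs_le_inv in Hy. unfold clampB, Rmax, Rmin.
  repeat destruct Rle_dec; unfold Rabs; repeat destruct Rcase_abs; lra.
Qed.

Section G.
Variable alpha : R.
Hypothesis Hirr : irrational alpha.

Lemma bound_RI f (Hf : Riemann_integrable f 0 1) :
  { B : R | 1 <= B /\ forall t, 0 <= t <= 1 -> Rabs (f t) <= B }.
Proof.
  destruct (Hf (mkposreal 1 ltac:(lra))) as [phi [psi [H1 _]]].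
  exists (SFbound 0 1 phi + SFbound 0 1 psi + 1).
  pose proof (SFbound_spec 0 1 phi ltac:(lra) 0 ltac:(lra)).
  pose proof (SFbound_spec 0 1 psi ltac:(lra) 0 ltac:(lra)).
  pose proof (Rabs_pos (phi 0)). pose proof (Rabs_pos (psi 0)).
  split; [lra|].
  intros t Ht. rewrite Rmin_left, Rmax_right in H1 by lra.
  specialize (H1 t Ht).
  pose proof (SFbound_spec 0 1 phi ltac:(lra) t Ht).
  pose proof (SFbound_spec 0 1 psi ltac:(lra) t Ht).
  replace (f t) with ((f t - phi t) + phi t) by ring.
  eapply Rle_trans; [apply Rabs_triang|].
  pose proof (Rle_abs (psi t)). lra.
Qed.

Lemma prod_rot_integrable f (Hf : Riemann_integrable f 0 1) th :
  Riemann_integrable (fun x => f (frac_part (x + th)) * f x) 0 1.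
Proof.
  destruct (bound_RI f Hf) as [B [HB1 HB]].
  intros eps.
  destruct (Hf (mkposreal (eps / (4 * B)) ltac:(apply Rdiv_lt_0_compat; [apply cond_pos| lra])))
    as [phi [psi [H1 H2]]].
  simpl in H2. rewrite Rmin_left, Rmax_right in H1 by lra.
  set (phic := mkStepFun (SF_comb 0 1 (fun u _ => clampB B u) phi phi (pre phi) (pre phi))).
  set (phir := mkStepFun (SF_rot phic th (pre phic))).
  set (Phi := mkStepFun (SF_comb 0 1 Rmult phir phic (pre phir) (pre phic))).
  set (psir := mkStepFun (SF_rot psi th (pre psi))).
  set (Z0 := mkStepFun (StepFun_P4 0 1 0)).
  set (Psi1 := mkStepFun (StepFun_P28 B Z0 psi)).
  set (Psi := mkStepFun (StepFun_P28 B Psi1 psir)).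
  exists Phi, Psi.
  assert (Hrho : forall t, 0 <= frac_part (t + th) <= 1) by (intros; pose proof (frac_bounds (t + th)); lra).
  split.
  - rewrite Rmin_left, Rmax_right by lra. intros t Ht. simpl.
    unfold fct_cte.
    set (r := frac_part (t + th)).
    assert (Hc1 : Rabs (f r - clampB B (phi r)) <= psi r).
    { eapply Rle_trans; [apply clampB_close, HB, Hrho| apply H1, Hrho]. }
    assert (Hc2 : Rabs (f t - clampB B (phi t)) <= psi t).
    { eapply Rle_trans; [apply clampB_close, HB, Ht| apply H1, Ht]. }
    pose proof (HB r (Hrho t)). pose proof (clampB_bound B (phi t) ltac:(lra)).
    replace (f r * f t - clampB B (phi r) * clampB B (phi t)) with
      (f r * (f t - clampB B (phi t)) + clampB B (phi t) * (f r - clampB B (phi r))) by ring.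
    eapply Rle_trans; [apply Rabs_triang|]. rewrite !Rabs_mult.
    pose proof (Rabs_pos (f t - clampB B (phi t))). pose proof (Rabs_pos (f r - clampB B (phi r))).
    pose proof (Rabs_pos (f r)). pose proof (Rabs_pos (clampB B (phi t))).
    assert (Rabs (f r) * Rabs (f t - clampB B (phi t)) <= B * psi t) by
      (apply Rmult_le_compat; auto).
    assert (Rabs (clampB B (phi t)) * Rabs (f r - clampB B (phi r)) <= B * psi r) by
      (apply Rmult_le_compat; auto).
    lra.
  - assert (E1 : RiemannInt_SF Psi = RiemannInt_SF Psi1 + B * RiemannInt_SF psir) by apply StepFun_P30.
    assert (E2 : RiemannInt_SF Psi1 = RiemannInt_SF Z0 + B * RiemannInt_SF psi) by apply StepFun_P30.
    assert (E3 : RiemannInt_SF Z0 = 0 * (1 - 0)) by apply StepFun_P18.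
    assert (E4 : RiemannInt_SF psir = RiemannInt_SF psi).
    { apply (Wg_unique alpha (fun t => psi (frac_part (t + th)))).
      - apply (Wg_SF alpha Hirr psir).
      - apply Wg_shift. apply (Wg_SF alpha Hirr psi). }
    rewrite E1, E2, E3, E4.
    replace (0 * (1 - 0) + B * RiemannInt_SF psi + B * RiemannInt_SF psi) with
      (2 * B * RiemannInt_SF psi) by ring.
    rewrite Rabs_mult, Rabs_pos_eq by lra.
    assert (2 * B * Rabs (RiemannInt_SF psi) < 2 * B * (eps / (4 * B))) by
      (apply Rmult_lt_compat_l; lra).
    assert (2 * B * (eps / (4 * B)) = eps / 2) by (field; lra).
    pose proof (cond_pos eps). lra.
Qed.

End G.

Lemma term_bound alpha f y (z : Z) n B k :
  (k < 2 * n + 1)%nat -> 0 <= B -> (forall t, 0 <= t <= 1 -> Rabs (f t) <= B) ->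
  let x := (Z.of_nat k - Z.of_nat n)%Z in
  let mu := mu_y f alpha y in
  Rabs (restr mu n x * tilde (restr mu n) (z - x)%Z -
        (fun t => f (frac_part (t + IZR (- z) * alpha)) * f t)
          (frac_part (y - INR n * alpha + INR k * alpha)))
  <= B * B * (iv 0 (IZR z) (INR k * 1) + iv (2 * INR n + IZR z + 1) (2 * INR n + 1) (INR k * 1)).
Proof.
  intros Hk HB Hf x mu. cbv beta.
  assert (Hx : (Z.abs x <= Z.of_nat n)%Z) by (unfold x; lia).
  assert (Eu : y - INR n * alpha + INR k * alpha = y + IZR x * alpha).
  { unfold x. rewrite minus_IZR, <- !INR_IZR_INZ. ring. }
  rewrite Eu.
  assert (Hr : restr mu n x = f (frac_part (y + IZR x * alpha))).
  { unfold restr. rewrite (proj2 (Z.leb_le _ _) Hx). reflexivity. }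
  rewrite Hr.
  pose proof (iv_01 0 (IZR z) (INR k * 1)).
  pose proof (iv_01 (2 * INR n + IZR z + 1) (2 * INR n + 1) (INR k * 1)).
  assert (HBB : 0 <= B * B) by nra.
  unfold tilde, restr.
  destruct (Z.leb (Z.abs (- (z - x))) (Z.of_nat n)) eqn:Hle.
  - replace (f (frac_part (frac_part (y + IZR x * alpha) + IZR (- z) * alpha)))
      with (mu (- (z - x))%Z).
    + rewrite Rmult_comm. unfold Rminus. rewrite Rplus_opp_r, Rabs_R0. nra.
    + unfold mu, mu_y, T_iter. f_equal. rewrite frac_frac_plus. f_equal.
      rewrite !opp_IZR, minus_IZR. ring.
  - apply Z.leb_gt in Hle.
    rewrite Rmult_0_r, Rminus_0_l, Rabs_Ropp, Rabs_mult.
    pose proof (frac_bounds (frac_part (y + IZR x * alpha) + IZR (- z) * alpha)).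
    pose proof (frac_bounds (y + IZR x * alpha)).
    assert (A1 : Rabs (f (frac_part (frac_part (y + IZR x * alpha) + IZR (- z) * alpha))) <= B)
      by (apply Hf; lra).
    assert (A2 : Rabs (f (frac_part (y + IZR x * alpha))) <= B) by (apply Hf; lra).
    assert (Hprod : Rabs (f (frac_part (frac_part (y + IZR x * alpha) + IZR (- z) * alpha))) *
                    Rabs (f (frac_part (y + IZR x * alpha))) <= B * B)
      by (apply Rmult_le_compat; auto; apply Rabs_pos).
    rewrite Rmult_1_r.
    pose proof (iv_01 0 (IZR z) (INR k)); pose proof (iv_01 (2 * INR n + IZR z + 1) (2 * INR n + 1) (INR k)).
    assert (Hcase : (Z.of_nat k < z)%Z \/ (2 * Z.of_nat n + z + 1 <= Z.of_nat k)%Z) by (unfold x in Hle; lia).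
    destruct Hcase as [Hc|Hc].
    + assert (iv 0 (IZR z) (INR k) = 1).
      { unfold iv. rewrite INR_IZR_INZ.
        destruct Rle_dec as [|n0]; [|exfalso; apply n0; apply IZR_le; lia].
        destruct Rlt_dec as [|n0]; [auto|exfalso; apply n0; apply IZR_lt; lia]. }
      nra.
    + assert (iv (2 * INR n + IZR z + 1) (2 * INR n + 1) (INR k) = 1).
      { unfold iv. rewrite !INR_IZR_INZ.
        destruct Rle_dec as [|n0]; [|exfalso; apply n0].
        - destruct Rlt_dec as [|n0]; [auto|exfalso; apply n0].
          replace (2 * IZR (Z.of_nat n) + 1) with (IZR (2 * Z.of_nat n + 1)) by
            (rewrite plus_IZR, mult_IZR; simpl; ring).
          apply IZR_lt; lia.
        - replace (2 * IZR (Z.of_nat n) + IZR z + 1) with (IZR (2 * Z.of_nat n + z + 1)) by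
            (rewrite !plus_IZR, mult_IZR; simpl; ring).
          apply IZR_le; lia. }
      nra.
Qed.

Lemma sumR_minus n F G : sumR n F - sumR n G = sumR n (fun k => F k - G k).
Proof. induction n; simpl; [ring|]. rewrite <- IHn. ring. Qed.

Lemma tri3 a b c : Rabs (a - c) <= Rabs (a - b) + Rabs (b - c).
Proof. replace (a - c) with ((a - b) + (b - c)) by ring. apply Rabs_triang. Qed.

Theorem mainTheorem5 (alpha : R) (f : R -> R)
  (Halpha : 0 < alpha) (Hirr : irrational alpha)
  (Hnn : forall x, 0 <= x < 1 -> 0 <= f x)
  (Hint : Riemann_integrable f 0 1) :
  forall y, 0 <= y < 1 ->
    exists gamma : zmeasure,
      is_autocorrelation (mu_y f alpha y) gamma /\
      forall z : Z,
        exists pr : Riemann_integrable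
                      (fun x => f (T_iter alpha (- z) x) * f x) 0 1,
          gamma z = RiemannInt pr.
Proof.
  intros y Hy.
  set (prz := fun z : Z => prod_rot_integrable alpha Hirr f Hint (IZR (- z) * alpha)).
  exists (fun z => RiemannInt (prz z)). split.
  2:{ intros z. exists (prz z). reflexivity. }
  intros z.
  set (g := fun t => f (frac_part (t + IZR (- z) * alpha)) * f t).
  assert (Wz : Wg alpha g (RiemannInt (prz z))) by apply (Wg_RI alpha Hirr g (prz z)).
  destruct (bound_RI f Hint) as [B [HB1 HB]].
  set (K := B * B * (Rabs (IZR z) + 2)).
  assert (HK : 0 <= K) by (unfold K; pose proof (Rabs_pos (IZR z)); nra).
  assert (Key : forall n, Rabs (autocorr_approx (mu_y f alpha y) n z -
                 avg alpha g (2 * n + 1) (y - INR n * alpha)) <= / INR (2 * n + 1) * K).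
  { intros n. unfold autocorr_approx, avg, conv_supp.
    rewrite sum_f_R0_sumR.
    replace (S (2 * n)) with (2 * n + 1)%nat by lia.
    rewrite <- Rmult_minus_distr_l, Rabs_mult.
    assert (Hpos : 0 < INR (2 * n + 1)) by (apply lt_0_INR; lia).
    rewrite Rabs_pos_eq by (left; apply Rinv_0_lt_compat; auto).
    apply Rmult_le_compat_l; [left; apply Rinv_0_lt_compat; auto|].
    rewrite sumR_minus. eapply Rle_trans; [apply sumR_abs|].
    eapply Rle_trans.
    { apply (sumR_le _ _ (fun k => B * B * (iv 0 (IZR z) (INR k * 1) +
                 iv (2 * INR n + IZR z + 1) (2 * INR n + 1) (INR k * 1)))).
      intros k Hk. apply (term_bound alpha f y z n B k Hk); [lra|auto]. }
    rewrite sumR_scal, sumR_plus.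
    pose proof (count_iv 0 (IZR z) 1 (2 * n + 1) ltac:(lra)).
    pose proof (count_iv (2 * INR n + IZR z + 1) (2 * INR n + 1) 1 (2 * n + 1) ltac:(lra)).
    assert (Rmax 0 ((IZR z - 0) / 1) + Rmax 0 ((2 * INR n + 1 - (2 * INR n + IZR z + 1)) / 1)
            <= Rabs (IZR z)).
    { unfold Rmax, Rabs. repeat destruct Rle_dec; destruct Rcase_abs; lra. }
    assert (0 <= B * B) by nra.
    unfold K. apply Rmult_le_compat_l; auto. lra. }
  intros eps He.
  destruct (Wz (eps / 2) ltac:(lra)) as [M HM].
  destruct (exists_N (2 * K / eps)) as [N1 HN1].
  exists (max M N1). intros n Hn. unfold Rdist, R_dist. cbv beta.
  specialize (HM (2 * n + 1)%nat (y - INR n * alpha) ltac:(lia)).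
  specialize (Key n).
  assert (Hpos : 0 < INR (2 * n + 1)) by (apply lt_0_INR; lia).
  assert (HnN : INR N1 + 1 <= INR (2 * n + 1)).
  { rewrite <- S_INR. apply le_INR. lia. }
  assert (Hsmall : / INR (2 * n + 1) * K < eps / 2).
  { apply Rmult_lt_reg_l with (INR (2 * n + 1)); auto.
    rewrite <- Rmult_assoc, Rinv_r by lra.
    assert (2 * K / eps * eps = 2 * K) by (field; lra).
    assert (2 * K / eps * eps <= INR N1 * eps) by (apply Rmult_le_compat_r; lra).
    nra. }
  pose proof (tri3 (autocorr_approx (mu_y f alpha y) n z) (avg alpha g (2 * n + 1) (y - INR n * alpha)) (@RiemannInt g 0 1 (prz z))).
  unfold g in *. lra.
Qed.
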